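(* Let $(G,f)\in\mathcal C$ with $|V(G)|=\aleph_0$. If $P$ is a hereditary property and $P(G,f)$ holds, then $G$ possesses a perfect $f$-factor.
   Context: A graph is $G=(V,E)$ with $V$ a nonempty set and $E\subseteq\{e\subseteq V:|e|=2\}$. For $F\subseteq E$ and $x\in V$, $d_F(x)$ is the cardinal $|\{e\in F:x\in e\}|$. For $f:V\to$ Cardinals, an $f$-factor of $G$ is $F\subseteq E$ with $d_F(x)\le f(x)$ for all $x$; it is perfect if $d_F(x)=f(x)$ for all $x$. $\mathcal C$ is the class of all pairs $(G,f)$ with $G=(V,E)$ a graph, $f:V\to$ Cardinals, and $f(x)\le d_E(x)$ for all $x\in V$. A property $P$ is a class of pairs; $P(G,f)$ means that $(G,f)\in\mathcal C$ and $(G,f)$ has property $P$. For $x,y\in V$, $G-\{x,y\}$ denotes $(V,E\setminus\{\{x,y\}\})$, and $f_{x,y}(v)=f(v)-1$ if $v\in\{x,y\}$ and $1\le f(v)<\aleph_0$, $f_{x,y}(v)=f(v)$ otherwise. $P$ is hereditary if for every $(G,f)$ with $P(G,f)$ and every $x\in V(G)$ with $f(x)>0$ there is $y\in V(G)$ with $f(y)>0$, $\{x,y\}\in E(G)$ and $P(G-\{x,y\},f_{x,y})$. *)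

(* Defs.v *)
From Stdlib Require Import List ClassicalEpsilon.
Import ListNotations.
Set Implicit Arguments.

(* Cardinals that can occur as degrees in a graph with countably many
   vertices: finite cardinals n, and aleph_0 (Inf). *)
Inductive card : Type := Fin (n : nat) | Inf.

Definition card_le (a b : card) : Prop :=
  match a, b with
  | Fin m, Fin n => m <= n
  | _, Inf => True
  | Inf, Fin _ => False
  end.

Section Graphs.
Variable V : Type.

Definition is_graph (E : V -> V -> Prop) : Prop :=
  (forall x y, E x y -> E y x) /\ (forall x, ~ E x x).

Definition edge_subset (F E : V -> V -> Prop) : Prop :=
  (forall x y, F x y -> F y x) /\ (forall x y, F x y -> E x y).

Definition has_deg (F : V -> V -> Prop) (x : V) (c : card) : Prop :=
  match c with
  | Fin n => exists l : list V, NoDup l /\ length l = n /\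
               (forall y, F x y <-> In y l)
  | Inf => ~ (exists l : list V, forall y, F x y -> In y l)
  end.

Definition inC (E : V -> V -> Prop) (f : V -> card) : Prop :=
  is_graph E /\ forall x, exists c, has_deg E x c /\ card_le (f x) c.

Definition holds (P : (V -> V -> Prop) -> (V -> card) -> Prop)
  (E : V -> V -> Prop) (f : V -> card) : Prop := inC E f /\ P E f.

Definition remove_edge (E : V -> V -> Prop) (x y : V) : V -> V -> Prop :=
  fun u v => E u v /\ ~ ((u = x /\ v = y) \/ (u = y /\ v = x)).

Definition card_pred (c : card) : card :=
  match c with
  | Fin (S n) => Fin n
  | c' => c'
  end.

Definition f_dec (f : V -> card) (x y : V) : V -> card :=
  fun v => if excluded_middle_informative (v = x \/ v = y)
           then card_pred (f v) else f v.

Definition hereditary (P : (V -> V -> Prop) -> (V -> card) -> Prop) : Prop :=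
  forall (E : V -> V -> Prop) (f : V -> card), holds P E f ->
  forall x, f x <> Fin 0 ->
  exists y, f y <> Fin 0 /\ E x y /\ holds P (remove_edge E x y) (f_dec f x y).

Definition countably_infinite : Prop :=
  exists g : nat -> V, (forall m n, g m = g n -> m = n) /\ (forall v, exists n, g n = v).

End Graphs.

(* Main.v *)
Require Import Defs.
From Stdlib Require Import List ClassicalEpsilon Classical Lia Arith Cantor.
Import ListNotations.

Section Pf.
Variable V : Type.
Variable E : V -> V -> Prop.
Variable f : V -> card.
Variable P : (V -> V -> Prop) -> (V -> card) -> Prop.
Variable g : nat -> V.
Hypothesis Hher : hereditary P.
Hypothesis HP : holds P E f.

Definition sched (k : nat) : V := g (fst (Cantor.of_nat k)).

Lemma sched_inf : forall i K, exists k, K <= k /\ sched k = g i.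
Proof.
  intros i K. exists (Cantor.to_nat (i, K)). split.
  - pose proof (Cantor.to_nat_non_decreasing i K). lia.
  - unfold sched. rewrite Cantor.cancel_of_to. reflexivity.
Qed.

Definition gp (E' : V -> V -> Prop) (f' : V -> card) x y :=
  f' y <> Fin 0 /\ E' x y /\ holds P (remove_edge E' x y) (f_dec f' x y).

Definition state := ((V -> V -> Prop) * (V -> card) * list (V * V))%type.

Definition step (x : V) (s : state) : state :=
  match s with (E', f', L) =>
  if excluded_middle_informative (f' x = Fin 0) then s
  else let y := epsilon (inhabits x) (gp E' f' x) in
    (remove_edge E' x y, f_dec f' x y, (x, y) :: L) end.

Fixpoint st (k : nat) : state :=
  match k with 0 => (E, f, nil) | S k => step (sched k) (st k) end.

Definition Ek k := fst (fst (st k)).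
Definition fk k := snd (fst (st k)).
Definition Lk k := snd (st k).

Lemma st_eta k : st k = (Ek k, fk k, Lk k).
Proof. unfold Ek, fk, Lk. destruct (st k) as [[a b] c]. reflexivity. Qed.

Lemma step_k k : holds P (Ek k) (fk k) ->
  (fk k (sched k) = Fin 0 /\ Ek (S k) = Ek k /\ fk (S k) = fk k /\ Lk (S k) = Lk k) \/
  (fk k (sched k) <> Fin 0 /\ exists y, gp (Ek k) (fk k) (sched k) y /\
     Ek (S k) = remove_edge (Ek k) (sched k) y /\ fk (S k) = f_dec (fk k) (sched k) y /\
     Lk (S k) = (sched k, y) :: Lk k).
Proof.
  intro H.
  assert (Hs : st (S k) = step (sched k) (Ek k, fk k, Lk k)) by (simpl; rewrite st_eta; reflexivity).
  assert (E1 : Ek (S k) = fst (fst (step (sched k) (Ek k, fk k, Lk k)))) by (unfold Ek at 1; rewrite Hs; reflexivity).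
  assert (E2 : fk (S k) = snd (fst (step (sched k) (Ek k, fk k, Lk k)))) by (unfold fk at 1; rewrite Hs; reflexivity).
  assert (E3 : Lk (S k) = snd (step (sched k) (Ek k, fk k, Lk k))) by (unfold Lk at 1; rewrite Hs; reflexivity).
  rewrite E1, E2, E3. clear E1 E2 E3 Hs. unfold step.
  destruct (excluded_middle_informative (fk k (sched k) = Fin 0)) as [h|h].
  - left. simpl. auto.
  - right. split; [exact h|].
    eexists. split; [|simpl; repeat split; reflexivity].
    apply epsilon_spec. apply Hher; assumption.
Qed.


Fixpoint nb (v : V) (L : list (V * V)) : list V :=
  match L with
  | nil => nil
  | (a, b) :: L' =>
     (if excluded_middle_informative (v = a) then [b] else nil) ++
     (if excluded_middle_informative (v = b) then [a] else nil) ++ nb v L'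
  end.

Definition FL (L : list (V * V)) u v := In (u, v) L \/ In (v, u) L.

Lemma nb_spec v L y : In y (nb v L) <-> FL L v y.
Proof.
  unfold FL. induction L as [|[a b] L IH]; simpl.
  - tauto.
  - destruct (excluded_middle_informative (v = a)) as [h1|h1];
    destruct (excluded_middle_informative (v = b)) as [h2|h2]; simpl;
    rewrite ?in_app_iff; simpl; rewrite IH; subst;
    split; intros H; repeat match goal with H : _ \/ _ |- _ => destruct H end;
    try (inversion H; subst); try tauto; try congruence.
Qed.

Lemma nb_a v a b L : v = a -> v <> b -> nb v ((a, b) :: L) = b :: nb v L.
Proof. intros h1 h2; simpl; destruct (excluded_middle_informative (v = a)); destruct (excluded_middle_informative (v = b)); try tauto; reflexivity. Qed.
Lemma nb_b v a b L : v <> a -> v = b -> nb v ((a, b) :: L) = a :: nb v L.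
Proof. intros h1 h2; simpl; destruct (excluded_middle_informative (v = a)); destruct (excluded_middle_informative (v = b)); try tauto; reflexivity. Qed.
Lemma nb_n v a b L : v <> a -> v <> b -> nb v ((a, b) :: L) = nb v L.
Proof. intros h1 h2; simpl; destruct (excluded_middle_informative (v = a)); destruct (excluded_middle_informative (v = b)); try tauto; reflexivity. Qed.

Lemma fdec_in (f' : V -> card) (x y v : V) : (v = x \/ v = y) -> f_dec f' x y v = card_pred (f' v).
Proof. intro h; unfold f_dec; destruct (excluded_middle_informative _); tauto. Qed.
Lemma fdec_out (f' : V -> card) (x y v : V) : ~ (v = x \/ v = y) -> f_dec f' x y v = f' v.
Proof. intro h; unfold f_dec; destruct (excluded_middle_informative _); tauto. Qed.

Definition Inv (E' : V -> V -> Prop) (f' : V -> card) (L : list (V * V)) : Prop :=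
  holds P E' f' /\
  (forall u v, E' u v <-> E u v /\ ~ FL L u v) /\
  (forall u v, FL L u v -> E u v) /\
  (forall v, NoDup (nb v L)) /\
  (forall v, match f v with
             | Fin n => exists m, f' v = Fin m /\ m + length (nb v L) = n
             | Inf => f' v = Inf end).

Lemma Inv0 : Inv E f nil.
Proof.
  split; [exact HP|]. split; [intros u v; unfold FL; simpl; tauto|].
  split; [intros u v; unfold FL; simpl; tauto|].
  split; [intros; simpl; constructor|].
  intro v; destruct (f v); simpl; eauto.
Qed.

Lemma Inv_step E' f' L x y : Inv E' f' L -> f' x <> Fin 0 -> gp E' f' x y ->
  Inv (remove_edge E' x y) (f_dec f' x y) ((x, y) :: L).
Proof.
  intros [H1 [H2 [H3 [H4 H5]]]] hx [hy [hE hH]].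
  assert (hxy : x <> y).
  { intro e; subst. destruct H1 as [[[_ irr] _] _]. exact (irr y hE). }
  assert (hnF : ~ FL L x y) by (apply H2 in hE; tauto).
  destruct HP as [[[Esym _] _] _].
  split; [exact hH|]. split.
  { intros u v. unfold remove_edge. rewrite H2. unfold FL; simpl.
    split.
    - intros [[a b] c]. split; [exact a|]. intros [[d|d]|[d|d]];
      try (inversion d; subst; tauto); tauto.
    - intros [a b]. split; [split; [exact a| intro d; apply b; unfold FL in *; tauto]|].
      intros [[d e]|[d e]]; subst; apply b; tauto. }
  split.
  { intros u v [[d|d]|[d|d]]; try (inversion d; subst).
    - apply H2 in hE; tauto.
    - apply H3; unfold FL; tauto.
    - apply Esym; apply H2 in hE; tauto.
    - apply H3; unfold FL; tauto. }
  split.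
  { intro v. destruct (classic (v = x)) as [e|e].
    - rewrite nb_a by (subst; auto). constructor; [|auto].
      subst. rewrite nb_spec. exact hnF.
    - destruct (classic (v = y)) as [e'|e'].
      + rewrite nb_b by auto. constructor; [|auto].
        subst. rewrite nb_spec. unfold FL in *. tauto.
      + rewrite nb_n by auto. auto. }
  intro v. specialize (H5 v).
  destruct (classic (v = x)) as [e|e].
  - rewrite nb_a by (subst; auto). rewrite fdec_in by auto.
    destruct (f v).
    + destruct H5 as [m [hm hl]]. subst v. rewrite hm in *.
      destruct m; [congruence|]. simpl. exists m. split; [reflexivity|lia].
    + rewrite H5. reflexivity.
  - destruct (classic (v = y)) as [e'|e'].
    + rewrite nb_b by auto. rewrite fdec_in by auto.
      destruct (f v).
      * destruct H5 as [m [hm hl]]. subst v. rewrite hm in *.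
        destruct m; [congruence|]. simpl. exists m. split; [reflexivity|lia].
      * rewrite H5. reflexivity.
    + rewrite nb_n by auto. rewrite fdec_out by tauto. exact H5.
Qed.


Lemma Inv_all k : Inv (Ek k) (fk k) (Lk k).
Proof.
  induction k.
  - exact Inv0.
  - destruct (step_k k (proj1 IHk)) as [[h [e1 [e2 e3]]]|[h [y [hy [e1 [e2 e3]]]]]].
    + rewrite e1, e2, e3. exact IHk.
    + rewrite e1, e2, e3. apply Inv_step; auto.
Qed.

Lemma stepk k :
  (fk k (sched k) = Fin 0 /\ Ek (S k) = Ek k /\ fk (S k) = fk k /\ Lk (S k) = Lk k) \/
  (fk k (sched k) <> Fin 0 /\ exists y, gp (Ek k) (fk k) (sched k) y /\
     Ek (S k) = remove_edge (Ek k) (sched k) y /\ fk (S k) = f_dec (fk k) (sched k) y /\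
     Lk (S k) = (sched k, y) :: Lk k).
Proof. apply step_k. exact (proj1 (Inv_all k)). Qed.

Lemma FL_mono k k' u v : k <= k' -> FL (Lk k) u v -> FL (Lk k') u v.
Proof.
  induction 1; auto. intro h. specialize (IHle h).
  destruct (stepk m) as [[_ [_ [_ e]]]|[_ [y [_ [_ [_ e]]]]]]; rewrite e; auto.
  unfold FL in *; simpl; tauto.
Qed.

Lemma len_mono k k' v : k <= k' -> length (nb v (Lk k)) <= length (nb v (Lk k')).
Proof.
  induction 1; auto.
  destruct (stepk m) as [[_ [_ [_ e]]]|[_ [y [_ [_ [_ e]]]]]]; rewrite e; auto.
  simpl. destruct (excluded_middle_informative (v = sched m));
  destruct (excluded_middle_informative (v = y)); simpl; lia.
Qed.

Lemma zero_stable k x : fk k x = Fin 0 -> fk (S k) x = Fin 0 /\ nb x (Lk (S k)) = nb x (Lk k).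
Proof.
  intro h. destruct (stepk k) as [[_ [_ [e2 e3]]]|[h0 [y [[hy _] [_ [e2 e3]]]]]].
  - rewrite e2, e3. auto.
  - assert (x <> sched k) by (intro; subst; congruence).
    assert (x <> y) by (intro; subst; congruence).
    rewrite e2, e3. rewrite fdec_out by tauto. rewrite nb_n by auto. auto.
Qed.

Lemma zero_stable_n k x d : fk k x = Fin 0 -> fk (d + k) x = Fin 0 /\ nb x (Lk (d + k)) = nb x (Lk k).
Proof.
  intro h. induction d; simpl; auto.
  destruct IHd as [a b]. destruct (zero_stable _ _ a) as [c e]. rewrite e, b. auto.
Qed.

Lemma f_noninc k k' v m : fk k v = Fin m -> k <= k' -> exists m', m' <= m /\ fk k' v = Fin m'.
Proof.
  intros h hk. induction hk.
  - exists m; auto.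
  - destruct IHhk as [m' [hm e]].
    destruct (stepk m0) as [[_ [_ [e2 _]]]|[_ [y [_ [_ [e2 _]]]]]].
    + rewrite e2. eauto.
    + rewrite e2. destruct (classic (v = sched m0 \/ v = y)).
      * rewrite fdec_in by auto. rewrite e. destruct m'; simpl; eexists; split; [|reflexivity| |reflexivity]; lia.
      * rewrite fdec_out by auto. eauto.
Qed.

Lemma reach_zero i : forall m k, fk k (g i) = Fin m -> exists k', fk k' (g i) = Fin 0.
Proof.
  intro m. induction m as [m IH] using lt_wf_ind. intros k h.
  destruct (sched_inf i k) as [k1 [hk1 hs]].
  destruct (f_noninc _ _ _ _ h hk1) as [m1 [hm1 e1]].
  destruct m1 as [|j]; [eauto|].
  destruct (stepk k1) as [[h0 _]|[_ [y [_ [_ [e2 _]]]]]].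
  - rewrite hs in h0. congruence.
  - apply (IH j ltac:(lia) (S k1)). rewrite e2, hs. rewrite fdec_in by auto. rewrite e1. reflexivity.
Qed.

Lemma inf_grow i : f (g i) = Inf -> forall N, exists k, N <= length (nb (g i) (Lk k)).
Proof.
  intros hf N. induction N.
  - exists 0; lia.
  - destruct IHN as [k hk].
    destruct (sched_inf i k) as [k1 [hk1 hs]].
    pose proof (len_mono _ _ (g i) hk1).
    assert (hI : fk k1 (g i) = Inf).
    { pose proof (proj2 (proj2 (proj2 (proj2 (Inv_all k1)))) (g i)) as q. rewrite hf in q. exact q. }
    exists (S k1).
    destruct (stepk k1) as [[h0 _]|[_ [y [[_ [hE _]] [_ [_ e3]]]]]].
    + rewrite hs, hI in h0. congruence.
    + rewrite e3. assert (g i <> y).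
      { intro q. destruct (proj1 (Inv_all k1)) as [[[_ irr] _] _]. rewrite hs in hE. subst. exact (irr _ hE). }
      rewrite nb_a by auto. simpl. lia.
Qed.


Lemma main (hsurj : forall v, exists n, g n = v) :
  exists F : V -> V -> Prop, edge_subset F E /\ forall x, has_deg F x (f x).
Proof.
  exists (fun u v => exists k, FL (Lk k) u v). split.
  { split.
    - intros x y [k h]. exists k. unfold FL in *; tauto.
    - intros x y [k h]. exact (proj1 (proj2 (proj2 (Inv_all k))) x y h). }
  intro x. destruct (hsurj x) as [i hi]. subst x.
  pose proof (proj2 (proj2 (proj2 (proj2 (Inv_all 0)))) (g i)) as q0.
  destruct (f (g i)) as [n|] eqn:hf.
  - destruct q0 as [m [hm _]].
    destruct (reach_zero i m 0 hm) as [k0 hk0].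
    pose proof (proj2 (proj2 (proj2 (proj2 (Inv_all k0)))) (g i)) as q.
    rewrite hf in q. destruct q as [m' [hm' hl]]. rewrite hk0 in hm'. injection hm' as <-.
    exists (nb (g i) (Lk k0)). split; [exact (proj1 (proj2 (proj2 (proj2 (Inv_all k0)))) _)|].
    split; [lia|].
    intro y. rewrite nb_spec. split.
    + intros [j hj]. destruct (le_lt_dec j k0) as [l|l].
      * exact (FL_mono _ _ _ _ l hj).
      * destruct (zero_stable_n k0 (g i) (j - k0) hk0) as [_ e].
        replace (j - k0 + k0) with j in e by lia.
        rewrite <- nb_spec, <- e, nb_spec. exact hj.
    + intro h; exists k0; exact h.
  - simpl. intros [l hl].
    destruct (inf_grow i hf (S (length l))) as [k hk].
    assert (length (nb (g i) (Lk k)) <= length l).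
    { apply NoDup_incl_length; [exact (proj1 (proj2 (proj2 (proj2 (Inv_all k)))) _)|].
      intros y hy. apply hl. exists k. apply nb_spec. exact hy. }
    lia.
Qed.

End Pf.

Theorem theorem1 (V : Type) (E : V -> V -> Prop) (f : V -> card)
  (P : (V -> V -> Prop) -> (V -> card) -> Prop) :
  countably_infinite V -> inC E f -> hereditary P -> holds P E f ->
  exists F : V -> V -> Prop, edge_subset F E /\ forall x, has_deg F x (f x).
Proof.
  intros [g [_ hs]] _ Hher HP. exact (@main V E f P g Hher HP hs).
Qed.
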